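(* Consider the two-unicast wireline network (''butterfly network 1'') with nodes $\mathsf{S}_1,\mathsf{S}_2,\mathsf{M}_1,\mathsf{M}_2,\mathsf{D}_1,\mathsf{D}_2$ and seven directed edges: edge 1 from $\mathsf{S}_1$ to $\mathsf{M}_1$, edge 2 from $\mathsf{S}_2$ to $\mathsf{M}_1$, edge 3 from $\mathsf{M}_1$ to $\mathsf{M}_2$, edge 4 from $\mathsf{S}_1$ to $\mathsf{D}_2$, edge 5 from $\mathsf{S}_2$ to $\mathsf{D}_1$, edge 6 from $\mathsf{M}_2$ to $\mathsf{D}_2$, edge 7 from $\mathsf{M}_2$ to $\mathsf{D}_1$, where edge $i$ has capacity $\mathsf{C}_i\ge 0$. Then every nonnegative rate pair $(R_1,R_2)$ satisfying $$R_1\le \min\{\mathsf{C}_1,\mathsf{C}_7\},\quad R_2\le \min\{\mathsf{C}_2,\mathsf{C}_6\},$$ $$R_1+R_2\le \mathsf{C}_3+\min\{R_2,\mathsf{C}_4,\mathsf{C}_5\},\quad R_1+R_2\le \mathsf{C}_3+\min\{R_1,\mathsf{C}_4,\mathsf{C}_5\}$$ is achievable (without security constraints).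
   Context: Network model: a directed acyclic graph; each edge $e$ is a noiseless orthogonal channel of capacity $\mathsf{C}_e$, carrying symbols from $\mathbb{F}_q$ (over $n$ channel uses edge $e$ carries a word $X_e^n$ of at most $n\mathsf{C}_e$ $q$-ary symbols' worth of information; received $Y_e^n=X_e^n$). Source $\mathsf{S}_i$ ($i=1,2$) has a message $W_i$, uniform, with $q$-ary entropy $nR_i$, $W_1,W_2$ independent; $W_i$ must be decoded at $\mathsf{D}_i$. A rate pair $(R_1,R_2)$ is achievable if for some block length $n$ there are encoding functions for every edge—an edge leaving $\mathsf{S}_i$ carries a function of $W_i$ only, and any other edge carries a function of the symbols received on the incoming edges of its tail node—and decoding functions $\phi_j$ applied to the symbols received on the incoming edges of $\mathsf{D}_j$ such that $\mathsf{D}_j$ recovers $W_j$ with vanishing error probability, $j=1,2$. *)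

(* Defs.v *)
From Stdlib Require Import Reals Lra Lia Arith List ZArith Znumtheory.
Import ListNotations.
Open Scope R_scope.

Definition prime_power (q : nat) : Prop :=
  exists p k : nat, prime (Z.of_nat p) /\ (1 <= k)%nat /\ q = (p ^ k)%nat.

Definition count_pairs (M1 M2 : nat) (P : nat -> nat -> bool) : nat :=
  length (filter (fun w => P (fst w) (snd w)) (list_prod (seq 0 M1) (seq 0 M2))).

(* A code of block length n: message sets [0,M1), [0,M2) (W1, W2 uniform and
   independent), edge alphabets [0, A e) with A e <= q^(n C e) (i.e. at most
   n C_e q-ary symbols' worth), encoders f1,f4 (functions of W1), f2,f5
   (functions of W2), f3 (of edges 1,2), f6,f7 (of edge 3), and decoders
   phi1 (at D1, from edges 5,7), phi2 (at D2, from edges 4,6).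
   The error probability of D_j is the fraction of message pairs (w1,w2)
   on which phi_j fails to output w_j.
   (R1,R2) is achievable if for every eps > 0 there is a code with
   q-ary rates (log_q M_i)/n >= R_i - eps and both error probabilities <= eps. *)
Definition butterfly1_achievable (q : nat) (C : nat -> R) (R1 R2 : R) : Prop :=
  forall eps : R, 0 < eps ->
  exists (n M1 M2 : nat) (A : nat -> nat)
         (f1 f2 f4 f5 f6 f7 : nat -> nat) (f3 : nat -> nat -> nat)
         (phi1 phi2 : nat -> nat -> nat),
    (1 <= n)%nat /\
    Rpower (INR q) (INR n * (R1 - eps)) <= INR M1 /\
    Rpower (INR q) (INR n * (R2 - eps)) <= INR M2 /\
    (forall e, (1 <= e <= 7)%nat -> INR (A e) <= Rpower (INR q) (INR n * C e)) /\
    (forall w1, (w1 < M1)%nat -> (f1 w1 < A 1%nat)%nat /\ (f4 w1 < A 4%nat)%nat) /\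
    (forall w2, (w2 < M2)%nat -> (f2 w2 < A 2%nat)%nat /\ (f5 w2 < A 5%nat)%nat) /\
    (forall x1 x2, (x1 < A 1%nat)%nat -> (x2 < A 2%nat)%nat -> (f3 x1 x2 < A 3%nat)%nat) /\
    (forall x3, (x3 < A 3%nat)%nat -> (f6 x3 < A 6%nat)%nat /\ (f7 x3 < A 7%nat)%nat) /\
    INR (count_pairs M1 M2 (fun w1 w2 =>
           negb (Nat.eqb (phi1 (f5 w2) (f7 (f3 (f1 w1) (f2 w2)))) w1)))
      <= eps * INR (M1 * M2) /\
    INR (count_pairs M1 M2 (fun w1 w2 =>
           negb (Nat.eqb (phi2 (f4 w1) (f6 (f3 (f1 w1) (f2 w2)))) w2)))
      <= eps * INR (M1 * M2).

(* Main.v *)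
Require Import Defs.
From Stdlib Require Import Reals.
From Stdlib Require Import Lra Lia Arith List ZArith Znumtheory.
Open Scope R_scope.

Lemma floor_ex (x : R) : 0 <= x -> exists k : nat, INR k <= x < INR k + 1.
Proof.
  intros Hx. destruct (archimed x) as [H1 H2].
  set (z := up x) in *.
  assert (Hz : (0 < z)%Z) by (apply lt_IZR; lra).
  exists (Z.to_nat (z - 1)).
  rewrite INR_IZR_INZ, Z2Nat.id by lia. rewrite minus_IZR. simpl. lra.
Qed.

Lemma t_ex (C : nat -> R) (R1 R2 : R) :
  0 <= C 4%nat -> 0 <= C 5%nat -> 0 <= R1 -> 0 <= R2 ->
  R1 + R2 <= C 3%nat + Rmin R2 (Rmin (C 4%nat) (C 5%nat)) ->
  R1 + R2 <= C 3%nat + Rmin R1 (Rmin (C 4%nat) (C 5%nat)) ->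
  exists t, 0 <= t /\ t <= R1 /\ t <= R2 /\ t <= C 4%nat /\ t <= C 5%nat /\
    R1 + R2 - t <= C 3%nat.
Proof.
  intros. exists (Rmin R1 (Rmin R2 (Rmin (C 4%nat) (C 5%nat)))).
  unfold Rmin in *. repeat destruct Rle_dec; repeat split; lra.
Qed.

Lemma modsmall (T a r : nat) : (r < T)%nat -> ((r + T * a) mod T = r /\ (r + T * a) / T = a)%nat.
Proof.
  intros H. split.
  - symmetry. apply (Nat.mod_unique _ _ a); lia.
  - symmetry. apply (Nat.div_unique _ _ _ r); lia.
Qed.

Lemma decmod (T x1 x2 : nat) : (x1 < T)%nat -> (x2 < T)%nat ->
  (((x1 + x2) mod T + T - x2) mod T = x1)%nat.
Proof.
  intros H1 H2.
  assert (HT : T <> 0%nat) by lia.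
  pose proof (Nat.div_mod (x1 + x2) T HT) as E.
  pose proof (Nat.mod_upper_bound (x1 + x2) T HT) as B.
  set (d := ((x1 + x2) / T)%nat) in *. set (s := ((x1 + x2) mod T)%nat) in *.
  assert (Hd : (d < 2)%nat) by nia.
  destruct d as [|[|d]].
  - symmetry. apply (Nat.mod_unique _ _ 1); lia.
  - symmetry. apply (Nat.mod_unique _ _ 0); lia.
  - lia.
Qed.

Lemma filter_nil {A} (f : A -> bool) (l : list A) :
  (forall x, In x l -> f x = false) -> filter f l = nil.
Proof.
  induction l; simpl; intros H; auto.
  rewrite H by auto. apply IHl. intros; apply H; auto.
Qed.

Lemma count0 (M1 M2 : nat) P :
  (forall w1 w2, (w1 < M1)%nat -> (w2 < M2)%nat -> P w1 w2 = false) ->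
  count_pairs M1 M2 P = 0%nat.
Proof.
  intros H. unfold count_pairs. rewrite filter_nil; auto.
  intros [a b] Hin. apply in_prod_iff in Hin. destruct Hin as [Ha Hb].
  apply in_seq in Ha. apply in_seq in Hb. simpl. apply H; lia.
Qed.

Lemma pow_Rp (q k : nat) : (2 <= q)%nat -> INR (q ^ k) = Rpower (INR q) (INR k).
Proof.
  intros Hq. rewrite Rpower_pow, pow_INR; auto.
  apply lt_0_INR; lia.
Qed.

Lemma Rp_le (q : nat) a b : (2 <= q)%nat -> a <= b -> Rpower (INR q) a <= Rpower (INR q) b.
Proof.
  intros Hq H. apply Rle_Rpower; auto. apply (le_INR 1) ; lia.
Qed.

Theorem theorem1 (q : nat) (C : nat -> R) (R1 R2 : R) :
  prime_power q ->
  (forall e, (1 <= e <= 7)%nat -> 0 <= C e) ->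
  0 <= R1 -> 0 <= R2 ->
  R1 <= Rmin (C 1%nat) (C 7%nat) ->
  R2 <= Rmin (C 2%nat) (C 6%nat) ->
  R1 + R2 <= C 3%nat + Rmin R2 (Rmin (C 4%nat) (C 5%nat)) ->
  R1 + R2 <= C 3%nat + Rmin R1 (Rmin (C 4%nat) (C 5%nat)) ->
  butterfly1_achievable q C R1 R2.
Proof.
  intros Hpp HC HR1 HR2 H1 H2 H3 H4 eps Heps.
  assert (Hq : (2 <= q)%nat).
  { destruct Hpp as [p [k [Hp [Hk ->]]]].
    destruct Hp as [Hp _].
    assert (2 <= p)%nat by lia.
    destruct k as [|k]; [lia|]. simpl.
    assert (p ^ k <> 0)%nat by (apply Nat.pow_nonzero; lia). nia. }

  assert (HC4 : 0 <= C 4%nat) by (apply HC; lia).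
  assert (HC5 : 0 <= C 5%nat) by (apply HC; lia).
  destruct (t_ex C R1 R2 HC4 HC5 HR1 HR2 H3 H4) as [t [Ht0 [Ht1 [Ht2 [Ht4 [Ht5 Ht3]]]]]].
  assert (Hm1 : R1 <= C 1%nat /\ R1 <= C 7%nat) by (unfold Rmin in H1; destruct Rle_dec; lra).
  assert (Hm2 : R2 <= C 2%nat /\ R2 <= C 6%nat) by (unfold Rmin in H2; destruct Rle_dec; lra).
  destruct (floor_ex (2 / eps)) as [k0 [Hk0 Hk0']].
  { apply Rlt_le, Rdiv_lt_0_compat; lra. }
  set (n := S k0).
  assert (HN : INR n = INR k0 + 1) by (unfold n; rewrite S_INR; lra).
  assert (HNe : 2 <= INR n * eps).
  { rewrite HN. apply Rlt_le. apply (Rmult_lt_reg_r (/ eps)). apply Rinv_0_lt_compat; lra.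
    rewrite Rmult_assoc, Rinv_r by lra. lra. }
  assert (HN0 : 0 <= INR n) by apply pos_INR.
  destruct (floor_ex (INR n * t)) as [kt [Hkt Hkt']]. { nra. }
  destruct (floor_ex (INR n * (R1 - t))) as [k1 [Hk1 Hk1']]. { nra. }
  destruct (floor_ex (INR n * (R2 - t))) as [k2 [Hk2 Hk2']]. { nra. }
  set (K := fun e : nat => match e with
      | 1%nat => (kt + k1)%nat | 2%nat => (kt + k2)%nat
      | 4%nat | 5%nat => kt | 6%nat => (kt + k2)%nat | 7%nat => (kt + k1)%nat
      | _ => (kt + k1 + k2)%nat end).
  set (T := (q ^ kt)%nat). set (Y1 := (q ^ k1)%nat). set (Y2 := (q ^ k2)%nat).
  assert (HT : (T <> 0)%nat) by (apply Nat.pow_nonzero; lia).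
  assert (HY1 : (Y1 <> 0)%nat) by (apply Nat.pow_nonzero; lia).
  assert (HY2 : (Y2 <> 0)%nat) by (apply Nat.pow_nonzero; lia).
  assert (EM1 : (q ^ (kt + k1) = T * Y1)%nat) by (apply Nat.pow_add_r).
  assert (EM2 : (q ^ (kt + k2) = T * Y2)%nat) by (apply Nat.pow_add_r).
  assert (EM3 : (q ^ (kt + k1 + k2) = T * Y1 * Y2)%nat) by (rewrite !Nat.pow_add_r; reflexivity).
  exists n, (T * Y1)%nat, (T * Y2)%nat, (fun e => q ^ K e)%nat,
    (fun w => w), (fun w => w), (fun w => w mod T)%nat, (fun w => w mod T)%nat,
    (fun z => z mod T + T * ((z / T) / Y1))%nat, (fun z => z mod T + T * ((z / T) mod Y1))%nat,
    (fun x1 x2 => (x1 mod T + x2 mod T) mod T + T * (x1 / T + Y1 * (x2 / T)))%nat,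
    (fun x5 z => ((z mod T + T - x5) mod T) + T * (z / T))%nat,
    (fun x4 z => ((z mod T + T - x4) mod T) + T * (z / T))%nat.
  assert (HNC : forall c d, c <= d -> INR n * c <= INR n * d) by (intros; nra).
  repeat split.
  - unfold n; lia.
  - rewrite <- EM1, pow_Rp by lia. apply Rp_le; auto. rewrite plus_INR. assert (INR n * (R1 - eps) = INR n * t + INR n * (R1 - t) - INR n * eps) by ring. lra.
  - rewrite <- EM2, pow_Rp by lia. apply Rp_le; auto. rewrite plus_INR. assert (INR n * (R2 - eps) = INR n * t + INR n * (R2 - t) - INR n * eps) by ring. lra.
  - intros e He. rewrite pow_Rp by lia. apply Rp_le; auto.
    destruct e as [|[|[|[|[|[|[|[|e]]]]]]]]; try lia; cbv delta [K] beta iota in *; rewrite ?plus_INR.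
    + pose proof (HNC _ _ (proj1 Hm1)). assert (INR n * R1 = INR n * t + INR n * (R1 - t)) by ring. lra.
    + pose proof (HNC _ _ (proj1 Hm2)). assert (INR n * R2 = INR n * t + INR n * (R2 - t)) by ring. lra.
    + pose proof (HNC _ _ Ht3). assert (INR n * (R1 + R2 - t) = INR n * t + INR n * (R1 - t) + INR n * (R2 - t)) by ring. lra.
    + pose proof (HNC _ _ Ht4). lra.
    + pose proof (HNC _ _ Ht5). lra.
    + pose proof (HNC _ _ (proj2 Hm2)). assert (INR n * R2 = INR n * t + INR n * (R2 - t)) by ring. lra.
    + pose proof (HNC _ _ (proj2 Hm1)). assert (INR n * R1 = INR n * t + INR n * (R1 - t)) by ring. lra.
  - intros; cbv delta [K] beta iota in *; rewrite EM1; auto.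
  - intros; cbv delta [K] beta iota in *; apply Nat.mod_upper_bound; auto.
  - intros; cbv delta [K] beta iota in *; rewrite EM2; auto.
  - intros; cbv delta [K] beta iota in *; apply Nat.mod_upper_bound; auto.
  - intros x1 x2 Hx1 Hx2. cbv delta [K] beta iota in *. rewrite EM3, EM1 in *. rewrite EM2 in Hx2.
    pose proof (Nat.mod_upper_bound (x1 mod T + x2 mod T) T HT).
    assert (x1 / T < Y1)%nat by (apply Nat.Div0.div_lt_upper_bound; lia).
    assert (x2 / T < Y2)%nat by (apply Nat.Div0.div_lt_upper_bound; lia).
    nia.
  - rename x3 into z; rename H into Hz; cbv delta [K] beta iota in *; rewrite EM3, EM2 in *.
    pose proof (Nat.mod_upper_bound z T HT).
    assert (z / T < Y1 * Y2)%nat by (apply Nat.Div0.div_lt_upper_bound; lia).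
    assert (z / T / Y1 < Y2)%nat by (apply Nat.Div0.div_lt_upper_bound; lia).
    nia.
  - rename x3 into z; rename H into Hz; cbv delta [K] beta iota in *; rewrite EM3, EM1 in *.
    pose proof (Nat.mod_upper_bound z T HT).
    pose proof (Nat.mod_upper_bound (z / T) Y1 HY1).
    nia.
  - rewrite count0. simpl. pose proof (pos_INR (T * Y1 * (T * Y2))). nra.
    intros w1 w2 Hw1 Hw2.
    pose proof (Nat.mod_upper_bound (w1 mod T + w2 mod T) T HT).
    assert (w1 / T < Y1)%nat by (apply Nat.Div0.div_lt_upper_bound; lia).
    destruct (modsmall T (w1 / T + Y1 * (w2 / T)) ((w1 mod T + w2 mod T) mod T)) as [E1 E2]; auto.
    rewrite E1, E2.
    destruct (modsmall Y1 (w2 / T) (w1 / T)) as [E3 E4]; auto. rewrite E3.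
    destruct (modsmall T (w1 / T) ((w1 mod T + w2 mod T) mod T)) as [E5 E6]; auto.
    rewrite E5, E6.
    rewrite decmod by (apply Nat.mod_upper_bound; auto).
    rewrite Nat.add_comm, <- (Nat.div_mod w1 T HT). rewrite Nat.eqb_refl. reflexivity.
  - rewrite count0. simpl. pose proof (pos_INR (T * Y1 * (T * Y2))). nra.
    intros w1 w2 Hw1 Hw2.
    pose proof (Nat.mod_upper_bound (w1 mod T + w2 mod T) T HT).
    assert (w1 / T < Y1)%nat by (apply Nat.Div0.div_lt_upper_bound; lia).
    destruct (modsmall T (w1 / T + Y1 * (w2 / T)) ((w1 mod T + w2 mod T) mod T)) as [E1 E2]; auto.
    rewrite E1, E2.
    destruct (modsmall Y1 (w2 / T) (w1 / T)) as [E3 E4]; auto. rewrite E4.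
    destruct (modsmall T (w2 / T) ((w1 mod T + w2 mod T) mod T)) as [E5 E6]; auto.
    rewrite E5, E6.
    rewrite (Nat.add_comm (w1 mod T)).
    rewrite decmod by (apply Nat.mod_upper_bound; auto).
    rewrite (Nat.add_comm (w2 mod T)), <- (Nat.div_mod w2 T HT). rewrite Nat.eqb_refl. reflexivity.
Qed.
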